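(* Let the training data $S=(X_i,Y_i)_{i=1}^n$ be (the first $n$ states of) a V-geometrically ergodic Markov chain on $\mathcal{Z}=\mathcal{X}\times\mathcal{Y}$ with stationary distribution $\pi$ and constants $\gamma,\rho,B$ as in the definition below, and let $\alpha\in(0,1)$. For all $\epsilon\in(0,3M]$ and $\delta\in(0,1)$, if the effective sample size $n_e$ satisfies \[ n_e \ge \frac{288M^2}{\epsilon^2}\left(\ln\frac{2}{\delta}+\ln(1+\gamma B e^{-2})+\ln \mathcal{N}\!\left(\mathcal{H},\frac{\epsilon}{24L}\right)\right), \] then \[ \mathbb{P}\left(\sup_{h\in\mathcal{H}\setminus\mathcal{H}_{\gamma^*+\epsilon}} P_n(h)\le \frac{\alpha^{n\epsilon/6}}{\mathcal{V}_{\epsilon/2}}\right)\ge 1-\delta. \]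
   Context: V-geometric ergodicity: Let $\mathcal{Z}$ be a compact subset of $\mathbb{R}^N$ with a $\sigma$-algebra $\mathcal{F}$. For probability measures $P_1,P_2$ on $(\mathcal{Z},\mathcal{F})$, $\|P_1-P_2\|_{TV}=2\sup_{A\in\mathcal{F}}|P_1(A)-P_2(A)|$. A Markov chain $(Z_i)_{i\ge1}$ on $\mathcal{Z}$ with $n$-step transition probabilities $P^n(\cdot\mid z)$ and stationary distribution $\pi$ is V-geometrically ergodic with respect to a measurable $V:\mathcal{Z}\to[1,\infty)$ if there exist $\gamma<\infty$, $\rho<1$, $B<\infty$ such that for all $z\in\mathcal{Z}$ and $n\ge1$, $\|P^n(\cdot\mid z)-\pi\|_{TV}\le\gamma\rho^nV(z)$, and $\int_{\mathcal{Z}}V\,d\pi<B$. Setting: $\mathcal{X}\subset\mathbb{R}^d$ and $\mathcal{Y}\subset\mathbb{R}$ are compact, $\mathcal{Z}=\mathcal{X}\times\mathcal{Y}$. $\mathcal{H}$ is a set of functions $h:\mathcal{X}\to\mathcal{Y}$ contained in a ball of the Hölder space $C^q(\mathcal{X})$ ($q>0$), with norm $\|h\|_{C^q}=\|h\|_\infty+\sup_{x_1\ne x_2}\frac{|h(x_1)-h(x_2)|}{\|x_1-x_2\|^q}$. Constants: $M=\sup_{h\in\mathcal{H}}\max_{(x,y)\in\mathcal{Z}}|h(x)-y|$ and $L=\sup_{h_1\ne h_2\in\mathcal{H}}\max_{(x,y)\in\mathcal{Z}}\frac{||h_1(x)-y|-|h_2(x)-y||}{\|h_1-h_2\|_\infty}$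 (both assumed positive and finite). The covering number $\mathcal{N}(\mathcal{H},\epsilon)$ is the smallest number of balls of radius $\epsilon$ (in $\|\cdot\|_{C^q}$) covering $\mathcal{H}$. Empirical loss $l_S(h)=\frac1n\sum_{i=1}^n|h(X_i)-Y_i|$; expected loss $l(h)=\mathbb{E}_{(X,Y)\sim\pi}|h(X)-Y|$. The effective sample size is $n_e=\left\lfloor \frac{n}{\lceil (8n/\ln(1/\rho))^{1/2}\rceil}\right\rfloor$. Prior and optimal loss: $\mu$ is a probability measure on $\mathcal{H}$; the sets $\mathcal{H}_t=\{h\in\mathcal{H}: l(h)\le t\}$ are $\mu$-measurable for all $t\in\mathbb{R}$. $\gamma^*=\inf\{t:\mu(\mathcal{H}_t)>0\}$, and for $\epsilon>0$, $\mathcal{V}_\epsilon=\mu(\mathcal{H}_{\gamma^*+\epsilon})$ (which is $>0$). Batched weighted average (BWA) algorithm with parameter $\alpha\in(0,1)$: weights $w_n(h)=\alpha^{n\,l_S(h)}$, normalized weights $P_n(h)=w_n(h)/\int_{\mathcal{H}}w_n\,d\mu$, and prediction $\bar h_n(x)=\int_{\mathcal{H}}P_n(h)h(x)\,d\mu(h)$. Known fact (Zou et al. 2012, uniform convergence): under this setting, for all $\epsilon\in(0,3M]$, $\delta\in(0,1)$, if $n_e\ge\frac{8M^2}{\epsilon^2}\big(\ln\frac2\delta+\ln(1+\gamma Be^{-2})+\ln\mathcal{N}(\mathcal{H},\frac{\epsilon}{4L})\big)$, then $\mathbb{P}(\forall h\in\mathcal{H},\ |l_S(h)-l(h)|<\epsilon)\ge1-\delta$.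 *)

(* Defs.v *)
From HB Require Import structures.
From mathcomp Require Import all_boot all_order all_algebra.
From mathcomp Require Import all_classical all_reals all_analysis.
Set Implicit Arguments. Unset Strict Implicit. Unset Printing Implicit Defensive.
Import Order.TTheory GRing.Theory Num.Theory.
Import numFieldNormedType.Exports.
Local Open Scope classical_set_scope.
Local Open Scope ring_scope.

Section HypothesisClass.
Variables (R : realType) (dim : nat).

Definition eucl_norm (v : 'rV[R]_dim) : R := Num.sqrt (\sum_i v ord0 i ^+ 2).

Definition sup_norm_on (X : set 'rV[R]_dim) (f : 'rV[R]_dim -> R) : \bar R :=
  ereal_sup [set (`|f x|)%:E | x in X].

Definition holder_norm (X : set 'rV[R]_dim) (q : R) (f : 'rV[R]_dim -> R) : \bar R :=
  (sup_norm_on X f +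
   ereal_sup [set (`|f p.1 - f p.2| / (eucl_norm (p.1 - p.2)) `^ q)%:E
             | p in [set p | X p.1 /\ X p.2 /\ p.1 <> p.2]])%E.

(** Covering number N(H, e): the least number of (closed) balls of radius e
    in the C^q(X) norm covering H (+oo if no finite cover exists). *)
Definition covering_number (X : set 'rV[R]_dim) (q : R)
    (H : set ('rV[R]_dim -> R)) (e : R) : \bar R :=
  ereal_inf [set (k%:R)%:E | k in [set k : nat |
     exists c : 'I_k -> ('rV[R]_dim -> R),
       forall h, H h -> exists i : 'I_k,
         (holder_norm X q (fun x => (h x - c i x)%R) <= e%:E)%E]].

Definition loss_bound (X : set 'rV[R]_dim) (Y : set R)
    (H : set ('rV[R]_dim -> R)) : \bar R :=
  ereal_sup [set (`|t.1 t.2.1 - t.2.2|)%:E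
            | t in [set t | H t.1 /\ (X `*` Y) t.2]].

Definition loss_lipschitz (X : set 'rV[R]_dim) (Y : set R)
    (H : set ('rV[R]_dim -> R)) : \bar R :=
  ereal_sup [set (`| `|t.1.1 t.2.1 - t.2.2| - `|t.1.2 t.2.1 - t.2.2| |
                  / fine (sup_norm_on X (fun x => t.1.1 x - t.1.2 x)))%:E
            | t in [set t | H t.1.1 /\ H t.1.2 /\
                            (exists2 x, X x & t.1.1 x <> t.1.2 x) /\
                            (X `*` Y) t.2]].
End HypothesisClass.

Section MarkovChain.
Context {R : realType} {d : measure_display} {S : measurableType d}.

Fixpoint kstep (K : R.-pker S ~> S) (m : nat) (z : S) (A : set S) : \bar R :=
  match m with
  | 0%N => (\1_A z)%:E
  | m.+1 => (\int[K z]_z' kstep K m z' A)%E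
  end.

Fixpoint fdd (K : R.-pker S ~> S) (A : nat -> set S) (m i : nat) (z : S) : \bar R :=
  match m with
  | 0%N => 1%E
  | m.+1 => (\int[K z]_(z' in A i) fdd K A m i.+1 z')%E
  end.

(** (Z_i)_{i >= 1} is a time-homogeneous Markov chain with initial
    distribution nu and transition kernel K: for every n and measurable
    A_1, ..., A_{n+1},
    P(Z_1 in A_1, ..., Z_{n+1} in A_{n+1})
      = int_{A_1} nu(dz_1) int_{A_2} K(z_1,dz_2) ... int_{A_{n+1}} K(z_n, dz_{n+1}) 1 *)
Definition markov_chain {dO : measure_display} {Omega : measurableType dO}
    (P : probability Omega R) (Zs : nat -> Omega -> S)
    (nu : probability S R) (K : R.-pker S ~> S) : Prop :=
  (forall i, (0 < i)%N -> measurable_fun setT (Zs i)) /\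
  forall (n : nat) (A : nat -> set S), (forall i, measurable (A i)) ->
    P (\bigcap_(i in [set i : nat | (1 <= i <= n.+1)%N]) (Zs i @^-1` A i)) =
    (\int[nu]_(z in A 1%N) fdd K A n 2 z)%E.

Definition stationary (K : R.-pker S ~> S) (pi : probability S R) : Prop :=
  forall A, measurable A -> pi A = (\int[pi]_z K z A)%E.

Definition supported_on (Zset : set S) (m : set S -> \bar R) : Prop :=
  forall A, measurable A -> A `&` Zset = set0 -> m A = 0%E.

Definition tv_dist (m1 m2 : set S -> \bar R) : \bar R :=
  (2%:E * ereal_sup [set `|m1 A - m2 A| | A in measurable])%E.

Definition V_geometrically_ergodic (Zset : set S) (K : R.-pker S ~> S)
    (pi : probability S R) (V : S -> R) (gamma rho B : R) : Prop :=
  measurable_fun setT V /\ (forall z, 1 <= V z) /\ rho < 1 /\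
  (forall z, Zset z -> forall n, (1 <= n)%N ->
      (tv_dist (kstep K n z) pi <= (gamma * rho ^+ n * V z)%R%:E)%E) /\
  (\int[pi]_z (V z)%:E < B%:E)%E.

(** inner probability: P(A) >= p is read as: A contains a measurable event
    of probability >= p (this coincides with P(A) >= p when A is measurable) *)
Definition inner_prob {dO : measure_display} {Omega : measurableType dO}
    (P : probability Omega R) (A : set Omega) : \bar R :=
  ereal_sup [set P E | E in [set E | measurable E /\ E `<=` A]].
End MarkovChain.

Section Learning.
Context {R : realType} {dim : nat}.
Context {dO : measure_display} {Omega : measurableType dO}.
Context {dS : measure_display} {S : measurableType dS}.
Variable (proj : S -> 'rV[R]_dim * R).

Definition emp_loss (n : nat) (Zs : nat -> Omega -> S)
    (h : 'rV[R]_dim -> R) (w : Omega) : R :=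
  n%:R^-1 * \sum_(1 <= i < n.+1) `|h (proj (Zs i w)).1 - (proj (Zs i w)).2|.

Definition exp_loss (pi : probability S R) (h : 'rV[R]_dim -> R) : R :=
  fine (\int[pi]_z (`|h (proj z).1 - (proj z).2|%R)%:E)%E.

Definition Hlevel (pi : probability S R) (H : set ('rV[R]_dim -> R)) (t : R)
  : set ('rV[R]_dim -> R) := [set h | H h /\ exp_loss pi h <= t].

Context {dH : measure_display} {HT : measurableType dH}.
Variable (ev : HT -> ('rV[R]_dim -> R)).

Definition gamma_star (pi : probability S R) (H : set ('rV[R]_dim -> R))
    (mu : probability HT R) : R :=
  inf [set t : R | (0 < mu (ev @^-1` Hlevel pi H t))%E].

Definition Vol (pi : probability S R) (H : set ('rV[R]_dim -> R))
    (mu : probability HT R) (e : R) : R :=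
  fine (mu (ev @^-1` Hlevel pi H (gamma_star pi H mu + e))).

Definition bwa_weight (alpha : R) (n : nat) (Zs : nat -> Omega -> S)
    (h : 'rV[R]_dim -> R) (w : Omega) : R :=
  alpha `^ (n%:R * emp_loss n Zs h w).

Definition bwa_Pn (alpha : R) (n : nat) (Zs : nat -> Omega -> S)
    (H : set ('rV[R]_dim -> R)) (mu : probability HT R)
    (h : 'rV[R]_dim -> R) (w : Omega) : R :=
  bwa_weight alpha n Zs h w /
  fine (\int[mu]_(g in ev @^-1` H) (bwa_weight alpha n Zs (ev g) w)%:E)%E.
End Learning.

Definition n_eff {R : realType} (n : nat) (rho : R) : R :=
  ((Num.floor (n%:R / ((Num.ceil (Num.sqrt (8 * n%:R / ln rho^-1) : R))%:~R : R)
     : R))%:~R : R).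

(* Main.v *)
Require Import Defs.
From HB Require Import structures.
From mathcomp Require Import all_boot all_order all_algebra.
From mathcomp Require Import all_classical all_reals all_analysis.
From mathcomp Require Import ring lra.
Import Order.TTheory GRing.Theory Num.Theory.
Import numFieldNormedType.Exports.
Local Open Scope classical_set_scope.
Local Open Scope ring_scope.


Local Open Scope ereal_scope.
Lemma int_mono d (T : measurableType d) (R : realType) (mu : {measure set T -> \bar R})
  (D1 D2 : set T) (f g : T -> \bar R) :
  (forall x, D1 x -> 0 <= f x) -> (forall x, D2 x -> 0 <= g x) ->
  (forall x, (f \_ D1) x <= (g \_ D2) x) ->
  \int[mu]_(x in D1) f x <= \int[mu]_(x in D2) g x.
Proof.
move=> f0 g0 fg; rewrite !ge0_integralE//.
apply: le_ereal_sup => _ [h /= hf <-]; exists h => //= x.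
exact: le_trans (hf x) (fg x).
Qed.
Local Close Scope ereal_scope.

Lemma powR_expR (R : realType) (a x : R) : 0 < a -> a `^ x = expR (x * ln a).
Proof. by move=> a0; rewrite /powR gt_eqF. Qed.

Theorem lemma2
  (R : realType) (dim : nat)
  (X : set 'rV[R]_dim) (Y : set R)
  (q : R) (H : set ('rV[R]_dim -> R)) (M L : R)
  (* sigma-algebra on the state space Z = X x Y (generated by F) *)
  (F : set (set ('rV[R]_dim * R)))
  (* underlying probability space *)
  (dO : measure_display) (Omega : measurableType dO) (P : probability Omega R)
  (* the chain (Z_i)_{i >= 1}, Z_i = (X_i, Y_i) *)
  (Zs : nat -> Omega -> g_sigma_algebraType F)
  (nu : probability (g_sigma_algebraType F) R)
  (K : R.-pker (g_sigma_algebraType F) ~> (g_sigma_algebraType F))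
  (pi : probability (g_sigma_algebraType F) R)
  (V : g_sigma_algebraType F -> R) (gamma rho B : R)
  (* sigma-algebra on the hypothesis functions (generated by G) and prior mu *)
  (G : set (set ('rV[R]_dim -> R)))
  (mu : probability (g_sigma_algebraType G) R)
  (alpha : R) :
  compact X -> compact Y -> 0 < q ->
  (forall h, H h -> forall x, X x -> Y (h x)) ->
  (exists r : R, forall h, H h -> (holder_norm X q h <= r%:E)%E) ->
  M%:E = loss_bound X Y H -> 0 < M ->
  L%:E = loss_lipschitz X Y H -> 0 < L ->
  (* Markov chain on Z with stationary distribution pi, V-geometrically ergodic *)
  markov_chain P Zs nu K ->
  (forall i w, (0 < i)%N -> (X `*` Y) (Zs i w : 'rV[R]_dim * R)) ->
  supported_on (X `*` Y : set (g_sigma_algebraType F)) nu ->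
  (forall z, (X `*` Y) (z : 'rV[R]_dim * R) ->
     supported_on (X `*` Y : set (g_sigma_algebraType F)) (K z)) ->
  supported_on (X `*` Y : set (g_sigma_algebraType F)) pi ->
  stationary K pi ->
  V_geometrically_ergodic (X `*` Y : set (g_sigma_algebraType F)) K pi V gamma rho B ->
  0 < rho ->
  (* prior mu on H, with measurable level sets H_t *)
  mu (H : set (g_sigma_algebraType G)) = 1%E ->
  (forall t, measurable
     (Hlevel (fun z : g_sigma_algebraType F => z : 'rV[R]_dim * R) pi H t
       : set (g_sigma_algebraType G))) ->
  0 < alpha < 1 ->
  (* Known fact (Zou et al. 2012): uniform convergence of empirical losses *)
  (forall (n : nat) (eps delta : R), 0 < eps <= 3 * M -> 0 < delta < 1 ->
     (exists2 N : nat, covering_number X q H (eps / (4 * L)) = (N%:R)%:E &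
        8 * M ^+ 2 / eps ^+ 2 *
          (ln (2 / delta) + ln (1 + gamma * B * expR (-2)) + ln N%:R)
        <= n_eff n rho) ->
     ((1 - delta)%:E <= inner_prob P [set w | forall h, H h ->
        (`|emp_loss (fun z : g_sigma_algebraType F => z : 'rV[R]_dim * R) n Zs h w
          - exp_loss (fun z : g_sigma_algebraType F => z : 'rV[R]_dim * R) pi h|
        < eps)%R])%E) ->
  (* Lemma 2 *)
  forall (n : nat) (eps delta : R), 0 < eps <= 3 * M -> 0 < delta < 1 ->
  (exists2 N : nat, covering_number X q H (eps / (24 * L)) = (N%:R)%:E &
     288 * M ^+ 2 / eps ^+ 2 *
       (ln (2 / delta) + ln (1 + gamma * B * expR (-2)) + ln N%:R)
     <= n_eff n rho) ->
  ((1 - delta)%:E <= inner_prob P [set w |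
     ereal_sup [set (bwa_Pn (fun z : g_sigma_algebraType F => z : 'rV[R]_dim * R)
                       (fun g : g_sigma_algebraType G => g : 'rV[R]_dim -> R)
                       alpha n Zs H mu h w)%:E
               | h in H `\` Hlevel (fun z : g_sigma_algebraType F => z : 'rV[R]_dim * R)
                   pi H (gamma_star (fun z : g_sigma_algebraType F => z : 'rV[R]_dim * R)
                     (fun g : g_sigma_algebraType G => g : 'rV[R]_dim -> R) pi H mu + eps)%R]
     <= (alpha `^ (n%:R * eps / 6) /
         Vol (fun z : g_sigma_algebraType F => z : 'rV[R]_dim * R)
             (fun g : g_sigma_algebraType G => g : 'rV[R]_dim -> R) pi H mu (eps / 2))%R%:E])%E.
Proof.
move=> cX cY q0 hY hb eM M0 eL L0 mc Zin nuS KS piS st erg rho0 muH mH a01 known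
  n eps delta /andP[e0 eM3] dr [N eN hN].
pose pr := (fun z : g_sigma_algebraType F => z : 'rV[R]_dim * R).
pose ev := (fun g : g_sigma_algebraType G => g : 'rV[R]_dim -> R).
have e6 : 0 < eps / 6 <= 3 * M.
  apply/andP; split; first by rewrite divr_gt0.
  by apply: le_trans eM3; rewrite ler_pdivrMr //; lra.
have Hk := known n (eps / 6) delta e6 dr _.
have {Hk} Hk : ((1 - delta)%:E <= inner_prob P [set w | forall h, H h ->
        (`|emp_loss pr n Zs h w - exp_loss pr pi h| < eps / 6)%R])%E.
  apply: Hk; exists N.
    by rewrite -eN; congr (covering_number _ _ _ _); field; rewrite gt_eqF.
  rewrite (_ : 8 * M ^+ 2 / (eps / 6) ^+ 2 = 288 * M ^+ 2 / eps ^+ 2) //.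
  by field; rewrite gt_eqF.
apply: (le_trans Hk); rewrite /inner_prob; apply: le_ereal_sup.
move=> _ [E [mE EA] <-]; exists E => //; split => //.
apply: (subset_trans EA) => w Hw.
move: w Hw.
have l0 : forall h, (0 <= exp_loss pr pi h)%R.
  by move=> h; rewrite /exp_loss; apply: fine_ge0; apply: integral_ge0 => z _; rewrite lee_fin.
pose S0 := [set t : R | (0 < mu (ev @^-1` Hlevel pr pi H t))%E].
have S0lb : forall t, S0 t -> (0 <= t)%R.
  move=> t St; rewrite leNgt; apply/negP => t0; move: St; rewrite /S0 /=.
  rewrite (_ : ev @^-1` Hlevel pr pi H t = set0) ?measure0 ?ltxx //.
  apply/seteqP; split => // h [_ /= ht]; have := l0 h; lra.
have S0ne : S0 !=set0.
  apply: contrapT => nk.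
  pose Hl k := ev @^-1` Hlevel pr pi H (k%:R).
  have Hl0 : forall k : nat, mu (Hl k) = 0%E.
    move=> k; apply/eqP; rewrite eq_le measure_ge0 andbT leNgt; apply/negP => hk.
    by apply: nk; exists k%:R.
  have HU : (H : set (g_sigma_algebraType G)) = \bigcup_k Hl k.
    apply/seteqP; split => [h Hh|h [k _ [Hh _]] //].
    exists (Num.truncn (exp_loss pr pi h)).+1 => //; split => //.
    exact: ltW (truncnS_gt _).
  have := measure_sigma_subadditive mu (fun k => mH k%:R)
    (bigcupT_measurable _ (fun k => mH k%:R)) (@subset_refl _ (\bigcup_k Hl k)).
  rewrite -HU => hh.
  have : (1 <= \big[+%E/0%R]_(0 <= k <oo) mu (Hl k))%E by rewrite -muH; exact: hh.
  by rewrite (eseries0 (fun k _ _ => Hl0 k)) lee_fin ler10.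
pose c := gamma_star pr ev pi H mu.
have [t St tlt] : exists2 t, S0 t & (t < c + eps / 2)%R.
  by apply: inf_lt => //; rewrite /c /gamma_star; lra.
pose A := ev @^-1` Hlevel pr pi H (c + eps / 2).
have mA : measurable A := mH _.
have muApos : (0 < mu A)%E.
  apply: (lt_le_trans St); apply: le_measure; [rewrite inE; exact: mH|rewrite inE; exact: mH|].
  by move=> h [Hh lh]; split => //; lra.
have muA1 : (mu A <= 1)%E := probability_le1 mu mA.
have Vpos : (0 < Vol pr ev pi H mu (eps / 2))%R.
  by rewrite /Vol; apply: fine_gt0; rewrite muApos /=; exact: le_lt_trans muA1 (ltey _).
have VE : mu A = (Vol pr ev pi H mu (eps / 2))%:E.
  rewrite /Vol fineK // ge0_fin_numE ?measure_ge0 //; exact: le_lt_trans muA1 (ltey _).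
move=> w Hw.
rewrite /=; apply: ge_ereal_sup => _ [h [Hh nHl] <-]; rewrite lee_fin.
have a0 : (0 < alpha)%R by case/andP: a01.
pose la := ln alpha.
have la0 : (la < 0)%R by exact: ln_lt0.
have lS0 : forall g, (0 <= emp_loss pr n Zs g w)%R.
  move=> g; rewrite /emp_loss mulr_ge0 ?invr_ge0 ?ler0n //.
  by apply: sumr_ge0 => i _.
have n0 : (0 <= n%:R :> R)%R by rewrite ler0n.
have lh : (c + eps < exp_loss pr pi h)%R.
  by rewrite ltNge; apply/negP => hl; apply: nHl; split.
have /ltr_normlP [hw1 hw2] := Hw h Hh.
pose E5 := expR (n%:R * (c + 5 * eps / 6) * la).
pose Kc := expR (n%:R * (c + 2 * eps / 3) * la).
have whle : (bwa_weight pr alpha n Zs h w <= E5)%R.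
  rewrite /bwa_weight powR_expR // /E5 ler_expR.
  apply: (ler_wnM2r (ltW la0)).
  by apply: ler_wpM2l => //; lra.
pose I := (\int[mu]_(g in ev @^-1` H) (bwa_weight pr alpha n Zs (ev g) w)%:E)%E.
have Ilow : (Kc%:E * mu A <= I)%E.
  rewrite -integral_cst //; apply: int_mono.
  - by move=> g _; rewrite lee_fin expR_ge0.
  - by move=> g _; rewrite lee_fin powR_ge0.
  - move=> g; rewrite /patch; case: ifPn => gA; last first.
      by case: ifPn => _; rewrite lee_fin ?powR_ge0.
    have [Hg lg] := set_mem gA.
    rewrite (mem_set (Hg : (ev @^-1` H) g)) /= lee_fin.
    rewrite /bwa_weight powR_expR // /Kc ler_expR.
    have /ltr_normlP [_ g2] := Hw g Hg.
    apply: (ler_wnM2r (ltW la0)).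
    by apply: ler_wpM2l => //; rewrite /ev /=; lra.
have Iup : (I <= 1)%E.
  apply: (@le_trans _ _ (\int[mu]_(g in setT) (cst 1%E) g)%E).
    apply: int_mono.
    - by move=> g _; rewrite lee_fin powR_ge0.
    - by move=> g _; rewrite lee_fin.
    - move=> g; rewrite /patch in_setT; case: ifPn => _; rewrite ?lee_fin //.
      rewrite /bwa_weight powR_expR // -expR0 ler_expR.
      by apply: mulr_ge0_le0; [exact: mulr_ge0|exact: ltW].
  by rewrite integral_cst // mul1e; exact: probability_le1.
have I0 : (0 <= I)%E by apply: integral_ge0 => g _; rewrite lee_fin powR_ge0.
have IE : I = (fine I)%:E.
  by rewrite fineK // ge0_fin_numE //; exact: le_lt_trans Iup (ltey _).
have KVle : (Kc * Vol pr ev pi H mu (eps / 2) <= fine I)%R.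
  by rewrite -lee_fin -IE EFinM -VE.
have KV0 : (0 < Kc * Vol pr ev pi H mu (eps / 2))%R by rewrite mulr_gt0 ?expR_gt0.
rewrite /bwa_Pn -/I ler_pdivrMr; last exact: lt_le_trans KV0 KVle.
apply: (le_trans whle).
apply: (@le_trans _ _ (alpha `^ (n%:R * eps / 6) / Vol pr ev pi H mu (eps / 2)
   * (Kc * Vol pr ev pi H mu (eps / 2)))%R); last first.
  by apply: ler_wpM2l => //; rewrite divr_ge0 ?powR_ge0 ?ltW.
rewrite powR_expR // /E5 /Kc.
have -> : (expR (n%:R * eps / 6 * ln alpha) / Vol pr ev pi H mu (eps / 2) *
   (expR (n%:R * (c + 2 * eps / 3) * la) * Vol pr ev pi H mu (eps / 2))
   = expR (n%:R * eps / 6 * ln alpha) * expR (n%:R * (c + 2 * eps / 3) * la))%R.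
  by field; rewrite gt_eqF.
rewrite -expRD /la le_eqVlt; apply/orP; left; apply/eqP; congr expR. by field.
Qed.
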